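(* Let $\tau$ be a primitive substitution. Then: (i) every generator of length one is basic; (ii) a generator $(v,ab,w)$ with $v,w\in\mathcal{A}^+$, $a,b\in\mathcal{A}$ is basic if and only if $\tau(a)=va$ and $\tau(b)=bw$; (iii) no generator of length three or more is basic.
   Context: Let $\mathcal{A}$ be a finite nonempty alphabet, $\mathcal{A}^*$ the finite words over $\mathcal{A}$ (including the empty word), $\mathcal{A}^+$ the nonempty words, $|u|$ the length of $u$. A word $u$ is a factor of $v$ if $v=w_1uw_2$ for some words $w_1,w_2$. A substitution is a map $\tau:\mathcal{A}\to\mathcal{A}^+$ extended to a concatenation-respecting map on words. The language $\mathcal{L}(\tau)$ is the set of words that are factors of $\tau^n(a)$ for some letter $a$ and some $n\ge1$. $\tau$ is primitive if there is $n\ge1$ such that every letter $b$ is a factor of $\tau^n(a)$ for every letter $a$, and there is a letter $a$ such that for every $N$ there is $n$ with $|\tau^n(a)|>N$. A generator for $\tau$ is a triple $(v,u,w)$ with $v,u,w\in\mathcal{A}^+$, $u\in\mathcal{L}(\tau)$ and $\tau(u)=vuw$; $v$, $u$, $w$ are its left wing, center and right wing, and its length is $|u|$. If $(v,u,cw)$ is a generator with $c\in\mathcal{A}$, $w\in\mathcal{A}^*$, its right extension is the generator $(v,uc,w\tau(c))$; if $(vc,u,w)$ is a generator with $c\in\mathcal{A}$, $v\in\mathcal{A}^*$, its left extension is the generator $(\tau(c)v,cu,w)$. Two generators $g_1,g_2$ are G related ($g_1\sim_G g_2$) if there is a generator $g_3$ obtainable from $g_1$ and also from $g_2$ by finite (possibly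 empty) sequences of left and right extensions. A generator is basic if it is not G related to any generator of smaller length. *)

(* Defs.v *)
From mathcomp Require Import all_boot.
Set Implicit Arguments. Unset Strict Implicit. Unset Printing Implicit Defensive.

Section Subst.
Variable A : finType.

Definition factor (u v : seq A) : Prop := exists w1 w2, v = w1 ++ u ++ w2.

Definition is_substitution (tau : A -> seq A) : Prop := forall a, tau a <> [::].

Definition subst (tau : A -> seq A) (u : seq A) : seq A := flatten (map tau u).

Definition language (tau : A -> seq A) (u : seq A) : Prop :=
  exists (a : A) (n : nat), 1 <= n /\ factor u (iter n (subst tau) [:: a]).

Definition primitive (tau : A -> seq A) : Prop :=
  (exists n, 1 <= n /\ forall a b : A, factor [:: b] (iter n (subst tau) [:: a])) /\
  (exists a : A, forall N : nat, exists n, N < size (iter n (subst tau) [:: a])).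

Definition triple := (seq A * seq A * seq A)%type.
Definition lwing (g : triple) := g.1.1.
Definition center (g : triple) := g.1.2.
Definition rwing (g : triple) := g.2.

Definition generator (tau : A -> seq A) (g : triple) : Prop :=
  lwing g <> [::] /\ center g <> [::] /\ rwing g <> [::] /\
  language tau (center g) /\
  subst tau (center g) = lwing g ++ center g ++ rwing g.

Definition right_ext (tau : A -> seq A) (g g' : triple) : Prop :=
  exists v u w (c : A), g = (v, u, c :: w) /\ g' = (v, rcons u c, w ++ tau c).

Definition left_ext (tau : A -> seq A) (g g' : triple) : Prop :=
  exists v u w (c : A), g = (rcons v c, u, w) /\ g' = (tau c ++ v, c :: u, w).

Inductive ext_reach (tau : A -> seq A) : triple -> triple -> Prop :=
| ext_refl g : ext_reach tau g g
| ext_stepR g g' g'' : right_ext tau g g' -> ext_reach tau g' g'' -> ext_reach tau g g''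
| ext_stepL g g' g'' : left_ext tau g g' -> ext_reach tau g' g'' -> ext_reach tau g g''.

Definition G_related (tau : A -> seq A) (g1 g2 : triple) : Prop :=
  exists g3, generator tau g3 /\ ext_reach tau g1 g3 /\ ext_reach tau g2 g3.

Definition basic (tau : A -> seq A) (g : triple) : Prop :=
  generator tau g /\
  ~ (exists g', generator tau g' /\ G_related tau g g' /\
                size (center g') < size (center g)).

End Subst.

(* Main.v *)
Require Import Defs.
From mathcomp Require Import all_boot.
From mathcomp Require Import zify.
Set Implicit Arguments. Unset Strict Implicit. Unset Printing Implicit Defensive.

Section S.
Variable A : finType.
Implicit Types (tau : A -> seq A).

Lemma catL (s x y : seq A) : s ++ x = s ++ y -> x = y.
Proof. elim: s => //= c s IH [] /IH. done. Qed.

Lemma catR (s x y : seq A) : x ++ s = y ++ s -> x = y.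
Proof.
move=> /(congr1 rev); rewrite !rev_cat => /catL /(congr1 rev); by rewrite !revK.
Qed.

Lemma cat_split (X Y X' Y' : seq A) : X ++ Y = X' ++ Y' ->
  (exists Z, X' = X ++ Z /\ Y = Z ++ Y') \/ (exists Z, X = X' ++ Z /\ Y' = Z ++ Y).
Proof.
elim: X X' => [|x X IH] [|x' X'] /=.
- move=> ->; left; by exists [::].
- move=> ->; left; by exists (x' :: X').
- move=> <-; right; by exists (x :: X).
- case=> -> /IH [[Z [-> ->]]|[Z [-> ->]]]; [left|right]; by exists Z.
Qed.

Lemma subst_cat tau x y : subst tau (x ++ y) = subst tau x ++ subst tau y.
Proof. by rewrite /subst map_cat flatten_cat. Qed.
Lemma subst1 tau c : subst tau [:: c] = tau c.
Proof. by rewrite /subst /= cats0. Qed.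
Lemma subst_cons tau c x : subst tau (c :: x) = tau c ++ subst tau x.
Proof. by []. Qed.
Lemma subst0 tau : subst tau [::] = [::].
Proof. by []. Qed.

Lemma size_tau tau c : is_substitution tau -> 0 < size (tau c).
Proof. move=> ht; rewrite lt0n size_eq0; apply/eqP; apply: ht. Qed.

Lemma size_subst tau x : is_substitution tau -> size x <= size (subst tau x).
Proof.
move=> ht; elim: x => //= c x IH.
rewrite subst_cons size_cat; have := size_tau c ht. lia.
Qed.

Lemma reach_inv tau g h : ext_reach tau g h ->
  exists p s, center h = p ++ center g ++ s /\
    lwing h ++ p = subst tau p ++ lwing g /\
    s ++ rwing h = rwing g ++ subst tau s.
Proof.
elim=> {g h}.
- move=> g; exists [::], [::]; by rewrite !cats0.
- move=> g g' g'' [v [u [w [c [-> ->]]]]] _ [p [s [Hc [Hl Hr]]]].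
  exists p, (c :: s); rewrite /center /lwing /rwing /= in Hc Hl Hr *.
  split; first by rewrite Hc -cat_rcons.
  split; first by [].
  by rewrite /= Hr subst_cons -catA.
- move=> g g' g'' [v [u [w [c [-> ->]]]]] _ [p [s [Hc [Hl Hr]]]].
  exists (rcons p c), s; rewrite /center /lwing /rwing /= in Hc Hl Hr *.
  split; first by rewrite Hc cat_rcons.
  split=> //.
  by rewrite -cats1 catA Hl -cats1 subst_cat subst1 -!catA.
Qed.

Lemma lang_factor tau u u' : language tau u -> factor u' u -> language tau u'.
Proof.
move=> [a [n [Hn [w1 [w2 E]]]]] [x1 [x2 Eu]]; exists a, n; split=> //.
exists (w1 ++ x1), (x2 ++ w2); by rewrite E Eu -!catA.
Qed.

Lemma reachL tau W p : forall w0 u,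
  ext_reach tau (w0 ++ p, u, W) (subst tau p ++ w0, p ++ u, W).
Proof.
elim/last_ind: p => [|p c IH] w0 u.
- rewrite cats0; exact: ext_refl.
- apply: (@ext_stepL _ _ _ ((tau c ++ w0) ++ p, c :: u, W)).
    exists (w0 ++ p), u, W, c; split; first by rewrite rcons_cat.
    by rewrite catA.
  have := IH (tau c ++ w0) (c :: u).
  move=> H; rewrite -cats1 subst_cat subst1 -!catA /=; rewrite -!catA /= in H; exact H.
Qed.

Lemma reachR tau V s : forall u W,
  ext_reach tau (V, u, s ++ W) (V, u ++ s, W ++ subst tau s).
Proof.
elim: s => [|c s IH] u W.
- rewrite subst0 !cats0; exact: ext_refl.
- apply: (@ext_stepR _ _ _ (V, rcons u c, s ++ (W ++ tau c))).
    exists V, u, (s ++ W), c; split=> //; by rewrite catA.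
  have := IH (rcons u c) (W ++ tau c).
  move=> H; rewrite subst_cons; rewrite cat_rcons -!catA in H; exact H.
Qed.

Lemma optA tau v x u1 w Z : generator tau (v, x :: u1, w) -> u1 <> [::] ->
  v = tau x ++ Z -> ~ basic tau (v, x :: u1, w).
Proof.
move=> Hg; have [Hv [Hu [Hw [Hl He]]]] := Hg.
move=> Hu1 Ev [_ Hb]; apply: Hb.
exists (Z ++ [:: x], u1, w); split; last split.
- split; first by case: (Z).
  split=> //; split=> //; split.
  + rewrite /center /= in Hl *; apply: (lang_factor Hl); exists [:: x], [::]; by rewrite cats0.
  + rewrite /= in He; rewrite subst_cons Ev -!catA in He.
    rewrite /center/lwing/rwing /= -catA; exact: (catL He).
- exists (v, x :: u1, w); split=> //; split; first exact: ext_refl.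
  have := reachL tau w [:: x] Z u1. by rewrite subst1 -Ev.
- by rewrite /center /=.
Qed.

Lemma optB tau v u2 y w Z : generator tau (v, rcons u2 y, w) -> u2 <> [::] ->
  w = Z ++ tau y -> ~ basic tau (v, rcons u2 y, w).
Proof.
move=> Hg; have [Hv [Hu [Hw [Hl He]]]] := Hg.
move=> Hu2 Ew [_ Hb]; apply: Hb.
exists (v, u2, y :: Z); split; last split.
- split=> //; split=> //; split=> //; split.
  + rewrite /center /= in Hl *; apply: (lang_factor Hl); exists [::], [:: y]; by rewrite cats1.
  + rewrite /= in He; rewrite -cats1 subst_cat subst1 Ew in He.
    rewrite /center/lwing/rwing /=; apply: (@catR (tau y)).
    by rewrite He -!catA.
- exists (v, rcons u2 y, w); split=> //; split; first exact: ext_refl.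
  have := reachR tau v [:: y] u2 Z. by rewrite subst1 -Ew cats1.
- by rewrite /center /= size_rcons.
Qed.

Lemma left_case tau v x u1 w : generator tau (v, x :: u1, w) -> u1 <> [::] ->
  basic tau (v, x :: u1, w) ->
  exists Z, tau x = v ++ x :: Z /\ u1 ++ w = Z ++ subst tau u1.
Proof.
move=> Hg Hu1 Hb; have [_ [_ [_ [_ He]]]] := Hg.
rewrite /= subst_cons in He.
case: (cat_split He) => [[Z [E1 E2]]|[[|z Z] [E1 E2]]].
- by case: (optA Hg Hu1 E1 Hb).
- rewrite cats0 /lwing /= in E1; apply: False_ind; apply: (optA (Z:=[::]) Hg Hu1 _ Hb); by rewrite E1 cats0.
- case: E2 => Exz E2; subst z; by exists Z.
Qed.

Lemma right_case tau v u2 y w : generator tau (v, rcons u2 y, w) -> u2 <> [::] ->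
  basic tau (v, rcons u2 y, w) ->
  exists Y, tau y = Y ++ y :: w /\ v ++ u2 = subst tau u2 ++ Y.
Proof.
move=> Hg Hu2 Hb; have [_ [_ [_ [_ He]]]] := Hg.
rewrite /lwing /= -!cats1 subst_cat subst1 in He.
have He' : subst tau u2 ++ tau y = (v ++ u2) ++ y :: w by rewrite He -!catA.
case: (cat_split He') => [[Z [E1 E2]]|[[|z Z] [E1 E2]]].
- by exists Z.
- exists [::]; by rewrite E2 E1 !cats0.
- case: E2 => E3 E2; subst z; by case: (optB Hg Hu2 E2 Hb).
Qed.

Lemma prim_fix tau c : primitive tau -> tau c = [:: c] -> False.
Proof.
move=> [[n0 [_ H1]] [a H2]] Hc.
have Hit : forall n, iter n (subst tau) [:: c] = [:: c].
  elim=> //= n ->; by rewrite subst1.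
have Eac : a = c.
  have [w1 [w2 E]] := H1 c a. rewrite Hit in E.
  have : a \in [:: c] by rewrite E !mem_cat mem_seq1 eqxx orbT.
  by rewrite mem_seq1 => /eqP.
have [n Hn] := H2 1. by rewrite Eac Hit in Hn.
Qed.

Lemma fixed_contra tau m Z Y : is_substitution tau -> primitive tau ->
  m <> [::] -> m = Z ++ subst tau m ++ Y -> False.
Proof.
move=> ht hp; case: m => [|c m] // _ E.
have H1 := size_subst m ht; have H2 := size_tau c ht.
rewrite subst_cons in E.
have S := congr1 size E; rewrite !size_cat /= in S.
case: Z E S => [|z Z] E S; last by rewrite /= in S; lia.
rewrite /= in E.
case Ec: (tau c) H2 E S => [|d [|d' t]] H2 E S; rewrite /= in E S H2; try lia.
case: E => Edc _; subst d; exact: prim_fix hp Ec.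
Qed.

End S.

Theorem mainTheorem3 (A : finType) (hA : 0 < #|A|) (tau : A -> seq A)
  (htau : is_substitution tau) (hprim : primitive tau) :
  (forall g : triple A, generator tau g -> size (center g) = 1 -> basic tau g) /\
  (forall (v w : seq A) (a b : A), v <> [::] -> w <> [::] ->
     generator tau (v, [:: a; b], w) ->
     (basic tau (v, [:: a; b], w) <-> tau a = v ++ [:: a] /\ tau b = b :: w)) /\
  (forall g : triple A, generator tau g -> 3 <= size (center g) -> ~ basic tau g).
Proof.
split; last split.
- move=> g Hg H1; split=> // [[g' [[_ [Hu _]] [_ Hs]]]].
  rewrite H1 in Hs; case: (center g') Hu Hs => //.
- move=> v w a b Hv Hw Hg; split.
  + move=> Hb.
    have [Z [E1 _]] := left_case (u1 := [:: b]) Hg (fun H => ltac:(discriminate H)) Hb.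
    have [Y [E3 E4]] := right_case (u2 := [:: a]) (y := b) Hg (fun H => ltac:(discriminate H)) Hb.
    rewrite subst1 E1 -catA in E4.
    move/catL: E4 => /= [] /esym E5.
    case: Z E5 E1 => [|? ?] //; case: Y E3 => [|? ?] // E3 _ E1; by rewrite E1 E3.
  + move=> [Ea Eb]; split=> // [[g' [Hg' [[g3 [Hg3 [R1 R2]]] Hs]]]].
    case: g' Hg' Hs R2 => [[v' u'] w'] Hg' Hs R2.
    case: g3 Hg3 R1 R2 => [[V U] W] Hg3 R1 R2.
    have [p1 [s1 [C1 [L1 R1']]]] := reach_inv R1.
    have [p2 [s2 [C2 [L2 R2']]]] := reach_inv R2.
    rewrite /center /lwing /rwing /= in C1 L1 R1' C2 L2 R2' Hs.
    have [Hv' [Hu' [Hw' [_ He']]]] := Hg'.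
    rewrite /center /lwing /rwing /= in Hv' Hu' Hw' He'.
    clear Hg' R2; case: u' Hs C2 Hu' He' => [|c [|? ?]] // _ C2 _ He'.
    rewrite subst1 in He'.
    have HP : V ++ rcons p1 a = subst tau (rcons p1 a).
      by rewrite -cats1 catA L1 subst_cat subst1 Ea -catA.
    have HQ : (b :: s1) ++ W = subst tau (b :: s1).
      by rewrite /= R1' subst_cons Eb.
    have HU : rcons p1 a ++ b :: s1 = p2 ++ c :: s2 by rewrite -C2 C1 cat_rcons.
    have nv := size_subst _ htau; have := size_cat.
    have Sv : 0 < size v' by case: (v') Hv'.
    have Sw : 0 < size w' by case: (w') Hw'.
    case: (cat_split HU) => [[Z [E1 E2]]|[[|z Z] [E1 E2]]].
    * rewrite E2 -catA /= R2' subst_cat subst_cons He' -!catA /= in HQ.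
      have H' : Z ++ (c :: w' ++ subst tau s2) = (subst tau Z ++ v') ++ (c :: w' ++ subst tau s2)
        by rewrite -catA.
      move/catR: H' => /(congr1 size); rewrite size_cat; have := nv Z; lia.
    * rewrite /= in E2; rewrite -E2 /= R2' subst_cons He' in HQ.
      move/(congr1 size): HQ; rewrite /= !size_cat /=; lia.
    * case: E2 => Ez E2; subst z.
      rewrite E1 catA L2 !subst_cat subst_cons He' -!catA in HP.
      move/catL: HP => /catL [] H'.
      move/(congr1 size): H'; rewrite size_cat; have := nv Z; lia.
- move=> [[v u] w] Hg; rewrite /center /= => H3 Hb.
  case: u H3 Hg Hb => [|x u1] //= H3.
  case/lastP: u1 H3 => [|m y] //= H3.
  rewrite size_rcons in H3.
  have Hm : m <> [::] by case: (m) H3.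
  have Hr : rcons m y <> [::] by case: (m).
  move=> Hg Hb.
  have [Z [E1 E2]] := left_case Hg Hr Hb.
  have [Y [E3 E4]] := right_case (u2 := x :: m) (y := y) Hg (fun H => ltac:(discriminate H)) Hb.
  rewrite subst_cons E1 -!catA in E4.
  move/catL: E4 => /= [] E5.
  exact: (fixed_contra htau hprim Hm E5).
Qed.
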